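(* Let $N\ge 2$ and let $X\subseteq \mathbb{Z}_N^2$ with $|X|=2N+1$. Suppose there is $a\in\mathbb{Z}_N$ such that $X$ contains every element of the row $\{a\}\times\mathbb{Z}_N$. Then there exists $S\subseteq X$ with $|S|=N$ and $\sum_{s\in S}s=(0,0)$.
   Context: For $a\in\mathbb{Z}_N$, the row $a$ of $\mathbb{Z}_N^2$ is the set $\{a\}\times\mathbb{Z}_N=\{(a,y):y\in\mathbb{Z}_N\}$. *)

(* Defs.v *)
From mathcomp Require Import all_boot all_algebra.
Set Implicit Arguments. Unset Strict Implicit. Unset Printing Implicit Defensive.
Import GRing.Theory.
Local Open Scope ring_scope.

Definition row_set (N : nat) (a : 'Z_N) : {set 'Z_N * 'Z_N} :=
  [set x | x.1 == a].

(* Main.v *)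
Require Import Defs.
From mathcomp Require Import all_boot all_algebra.
From mathcomp Require Import zify.
Set Implicit Arguments. Unset Strict Implicit. Unset Printing Implicit Defensive.
Import GRing.Theory.
Local Open Scope ring_scope.
Lemma card_ZN N : (1 < N)%N -> #|'Z_N| = N.
Proof. by move=> hN; rewrite card_ord Zp_cast. Qed.

Lemma natr_valZ N (z : 'Z_N) : (z : nat)%:R = z.
Proof. exact: natr_Zp. Qed.

Lemma sum_fst N (I : finType) (P : pred I) (F : I -> 'Z_N * 'Z_N) :
  (\sum_(i | P i) F i).1 = \sum_(i | P i) (F i).1.
Proof. by apply: (big_morph fst) => //. Qed.

Lemma sum_snd N (I : finType) (P : pred I) (F : I -> 'Z_N * 'Z_N) :
  (\sum_(i | P i) F i).2 = \sum_(i | P i) (F i).2.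
Proof. by apply: (big_morph snd) => //. Qed.

Lemma subset_sums N (hN : (1 < N)%N) (m : nat) : (0 < m)%N -> (m < N)%N ->
  forall c : 'Z_N, exists R : {set 'Z_N}, #|R| = m /\ \sum_(r in R) r = c.
Proof.
move=> m0 mN.
have step : forall R : {set 'Z_N}, #|R| = m ->
    exists R' : {set 'Z_N}, #|R'| = m /\ \sum_(r in R') r = \sum_(r in R) r + 1.
  move=> R cR.
  have [x xR nx1] : exists2 x, x \in R & x + 1 \notin R.
    apply/exists_inP; apply: contraT; rewrite negb_exists_in => /forall_inP H.
    have H' : forall x, x \in R -> x + 1 \in R by move=> x /H; rewrite negbK.
    have /card_gt0P [x0 x0R] : (0 < #|R|)%N by rewrite cR.
    have Hk : forall k : nat, x0 + k%:R \in R.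
      elim=> [|k IH]; first by rewrite addr0.
      by rewrite mulrSr addrA; apply: H'.
    have : R = setT.
      apply/setP => y; rewrite inE.
      have -> : y = x0 + (nat_of_ord (y - x0)%R)%:R by rewrite natr_valZ addrC subrK.
      exact: Hk.
    move=> RT; move: cR; rewrite RT cardsT card_ZN // => eN.
    by move: mN; rewrite eN ltnn.
  exists ((x + 1) |: (R :\ x)); split.
    rewrite cardsU1 in_setD1 (negbTE nx1) andbF /=.
    move: cR; rewrite (cardsD1 x R) xR => <-. by rewrite add1n.
  rewrite big_setU1 /=; last by rewrite in_setD1 (negbTE nx1) andbF.
  rewrite (big_setD1 x xR) /=. by rewrite addrAC addrC.
set R0 := [set x in take m (enum 'Z_N)].
have cR0 : #|R0| = m.
  rewrite /R0 cardsE (card_uniqP _); last by rewrite take_uniq // enum_uniq.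
  by rewrite size_takel // -cardE card_ZN // ltnW.
have Hk : forall k : nat, exists R : {set 'Z_N}, #|R| = m /\ \sum_(r in R) r = \sum_(r in R0) r + k%:R.
  elim=> [|k [R [cR sR]]]; first by exists R0; rewrite addr0.
  have [R' [cR' sR']] := step R cR.
  by exists R'; rewrite sR' sR mulrSr addrA.
move=> c.
have [R [cR sR]] := Hk (nat_of_ord (c - \sum_(r in R0) r)%R).
by exists R; rewrite sR natr_valZ addrC subrK.
Qed.
Lemma chain (T : finType) (V : zmodType) (O : {set T}) (b : T -> V) (s : seq T) i j :
  uniq s -> {subset s <= O} -> (i < j)%N -> (j <= size s)%N ->
  \sum_(x <- take i s) b x = \sum_(x <- take j s) b x ->
  exists Tt : {set T}, [/\ Tt \subset O, (0 < #|Tt|)%N, (#|Tt| <= size s)%N &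
     \sum_(x in Tt) b x = 0].
Proof.
move=> us sO ij js E.
have ud : uniq (drop i (take j s)) by rewrite drop_uniq // take_uniq.
exists [set x in drop i (take j s)]; split.
- by apply/subsetP => x; rewrite inE => /mem_drop /mem_take /sO.
- rewrite cardsE (card_uniqP ud) size_drop size_takel //; by rewrite subn_gt0.
- rewrite cardsE (card_uniqP ud) size_drop size_takel //; exact: leq_trans (leq_subr _ _) js.
- have E2 : \sum_(x <- take j s) b x =
      \sum_(x <- take i s) b x + \sum_(x <- drop i (take j s)) b x.
    by rewrite -{1}(cat_take_drop i (take j s)) big_cat (take_takel _ (ltnW ij)).
  have E3 : \sum_(x <- drop i (take j s)) b x = 0.
    by apply: (@addrI _ (\sum_(x <- take i s) b x)); rewrite -E2 -E addr0.
  rewrite -[RHS]E3 (big_uniq _ ud); apply: eq_bigl => x; by rewrite inE.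
Qed.

Lemma card_row N (hN : (1 < N)%N) (c : 'Z_N) : #|row_set c| = N.
Proof.
have -> : row_set c = [set (c, y) | y : 'Z_N].
  apply/setP => -[x y]; rewrite /row_set inE /=.
  apply/eqP/imsetP.
    by move=> ->; exists y.
  by case=> z _ [].
rewrite card_imset; first by rewrite card_ord Zp_cast.
by move=> y1 y2 [].
Qed.
Lemma build N (hN : (1 < N)%N) (X : {set 'Z_N * 'Z_N}) (a : 'Z_N)
  (ha : row_set a \subset X) (T : {set 'Z_N * 'Z_N}) :
  T \subset X -> (forall x, x \in T -> x.1 != a) -> (0 < #|T|)%N -> (#|T| < N)%N ->
  \sum_(x in T) (x.1 - a) = 0 ->
  exists S : {set 'Z_N * 'Z_N},
    [/\ S \subset X, #|S| = N & \sum_(s in S) s = 0].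
Proof.
move=> TX Tn k0 kN sT.
have m0 : (0 < N - #|T|)%N by rewrite subn_gt0.
have mN : (N - #|T| < N)%N by rewrite ltn_subrL k0 (ltn_trans k0 kN).
have [R [cR sR]] := subset_sums hN m0 mN (- \sum_(x in T) x.2).
set Rr := [set (a, r) | r in R].
have inj : {in R &, injective (fun r : 'Z_N => (a, r))} by move=> y1 y2 _ _ [].
have dis : [disjoint T & Rr].
  apply/pred0P => x /=; apply/negbTE/negP => /andP [/Tn xa /imsetP [r _ xr]].
  by move: xa; rewrite xr /= eqxx.
exists (T :|: Rr); split.
- rewrite subUset TX /=; apply/subsetP => y /imsetP [r _ ->]; apply: (subsetP ha).
  by rewrite inE.
- rewrite cardsU (disjoint_setI0 dis) cards0 subn0 card_imset; last by move=> y1 y2 [].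
  by rewrite cR subnKC // ltnW.
- rewrite (eq_bigl [predU T & Rr]); last by move=> x; rewrite !inE.
  rewrite bigU // big_imset //=.
  have fT : \sum_(x in T) x.1 = a *+ #|T|.
    by move: sT; rewrite sumrB sumr_const => /eqP; rewrite subr_eq0 => /eqP.
  apply/eqP; rewrite xpair_eqE; apply/andP; split; apply/eqP.
  + rewrite /= sum_fst fT.
    rewrite sum_fst /= sumr_const cR.
    by rewrite -mulrnDr (subnKC (ltnW kN)) -mulr_natr (pchar_Zp hN) mulr0.
  + by rewrite sum_snd sum_snd /= sR subrr.
Qed.
Lemma natA (N j : nat) : (2 < N)%N -> (j < N)%N -> (j <= (N - 3).+2)%N.
Proof. lia. Qed.
Lemma natB (N : nat) : (2 < N)%N -> ((N - 3).+2 < N)%N.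
Proof. lia. Qed.
Lemma natC (N : nat) : (2 < N)%N -> (N.+1 - 2)%N = N.-1.
Proof. lia. Qed.
Lemma natD (N : nat) : (2 < N)%N -> (N - 3 <= N.-1)%N.
Proof. lia. Qed.

Unset Implicit Arguments.
Theorem theorem3p1 (N : nat) (hN : (1 < N)%N) (X : {set 'Z_N * 'Z_N})
  (hX : #|X| = (2 * N).+1) (a : 'Z_N) (ha : row_set a \subset X) :
  exists S : {set 'Z_N * 'Z_N},
    [/\ S \subset X, #|S| = N & \sum_(s in S) s = 0].
Proof.
set O := X :\: row_set a.
have cO : #|O| = N.+1.
  by rewrite cardsD (setIidPr ha) card_row // hX mul2n -addnn -addSn addnK.
have OX : O \subset X by apply: subsetDl.
have On : forall x, x \in O -> x.1 != a.
  by move=> x; rewrite !inE => /andP [].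
have N3 : (2 < N)%N.
  rewrite ltn_neqAle hN andbT; apply/negP => /eqP N2.
  by have := max_card X; rewrite card_prod card_ZN // hX -N2.
have /card_gt0P [u uO] : (0 < #|O|)%N by rewrite cO.
have : ~~ (O \subset row_set u.1).
  by apply/negP => /subset_leq_card; rewrite cO card_row // ltnn.
case/subsetPn => v vO; rewrite inE => nuv.
have uv : u != v by apply/eqP => e; rewrite e eqxx in nuv.
set O' := O :\: [set u; v].
have cO' : #|O'| = N.-1.
  rewrite cardsD (setIidPr _); last by apply/subsetP => x /set2P [] ->.
  by rewrite cards2 uv cO natC.
set rest := take (N - 3) (enum O').
have srest : size rest = (N - 3)%N by rewrite size_takel // -cardE cO' natD.
have urest : uniq rest by rewrite take_uniq // enum_uniq.
have mrest : forall x, x \in rest -> [/\ x \in O, x != u & x != v].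
  move=> x /mem_take; rewrite mem_enum !inE => /andP [/norP [xu xv] /andP [xnr xX]].
  by rewrite xnr xX.
set s := [:: u, v & rest]; set s' := [:: v, u & rest].
have us : uniq s.
  rewrite /s /= urest inE negb_or uv /= andbT.
  apply/andP; split; apply/negP => /mrest [_ /eqP H1 /eqP H2]; by [apply: H1 | apply: H2].
have us' : uniq s'.
  rewrite /s' /= urest inE negb_or eq_sym uv /= andbT.
  apply/andP; split; apply/negP => /mrest [_ /eqP H1 /eqP H2]; by [apply: H1 | apply: H2].
have sO : {subset s <= O}.
  by move=> x; rewrite !in_cons => /or3P [/eqP -> | /eqP -> | /mrest []].
have sO' : {subset s' <= O}.
  by move=> x; rewrite !in_cons => /or3P [/eqP -> | /eqP -> | /mrest []].
have ss : size s = (N - 3).+2 by rewrite /= srest.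
have ss' : size s' = (N - 3).+2 by rewrite /= srest.
set b := fun x : 'Z_N * 'Z_N => x.1 - a.
suffices [Tt [TO T0 Ts sTt]] : exists Tt : {set 'Z_N * 'Z_N},
    [/\ Tt \subset O, (0 < #|Tt|)%N, (#|Tt| <= (N - 3).+2)%N & \sum_(x in Tt) b x = 0].
  apply: (build hN ha (T:=Tt)) => //.
  - exact: subset_trans TO OX.
  - by move=> x /(subsetP TO) /On.
  - exact: (leq_ltn_trans Ts (natB N3)).
set hh := fun n : nat => if (n < N)%N then \sum_(x <- take n s) b x else b v.
have key : forall i j : nat, (i < j)%N -> (j <= N)%N -> hh i = hh j ->
    exists Tt : {set 'Z_N * 'Z_N},
    [/\ Tt \subset O, (0 < #|Tt|)%N, (#|Tt| <= (N - 3).+2)%N & \sum_(x in Tt) b x = 0].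
  move=> i j ij jN E.
  have iN : (i < N)%N by apply: leq_trans ij jN.
  rewrite /hh iN in E.
  case: (ltnP j N) => jN'.
    rewrite jN' in E.
    have := chain us sO ij _ E; rewrite ss; apply; exact: natA.
  rewrite ltnNge jN' /= in E.
  case: i ij iN E => [|[|i]] ij iN E.
  - have E' : \sum_(x <- take 0 s') b x = \sum_(x <- take 1 s') b x.
      rewrite take0 big_nil (_ : take 1 s' = [:: v]) // big_seq1 -E.
      by rewrite take0 big_nil.
    by have := chain us' sO' (ltnSn 0) _ E'; rewrite ss'; apply.
  - exfalso; move: E; rewrite (_ : take 1 s = [:: u]) // big_seq1 /b => /addIr e.
    by rewrite e eqxx in nuv.
  - have E' : \sum_(x <- take 1 s') b x = \sum_(x <- take i.+2 s') b x.
      move: E; rewrite (_ : take i.+2 s = [:: u, v & take i rest]) // !big_cons => E.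
      by rewrite big_nil addr0 [RHS]addrCA E.
    have := chain us' sO' (ltnSn 1 : (1 < i.+2)%N) _ E'; rewrite ss'; apply; exact: natA.
have : ~~ injectiveb (fun i : 'I_N.+1 => hh i).
  apply/negP => /injectiveP /leq_card; rewrite card_ord card_ZN // ltnn.
  by [].
case/injectivePn => i [j] ij hij.
have hij' : hh i = hh j := hij.
have iN1 : (i <= N)%N := ltn_ord i.
have jN1 : (j <= N)%N := ltn_ord j.
case: (ltngtP (nat_of_ord i) (nat_of_ord j)) => c.
- exact: (key i j c jN1 hij').
- exact: (key j i c iN1 (esym hij')).
- by move: ij; rewrite (val_inj c) eqxx.
Qed.
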